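(* If $\Theta\cdot\Gamma\vdash P$ and $\Gamma'\leqslant\Gamma$, then $\Theta\cdot\Gamma'\vdash P$.
   Context: Session types: $S::=B\mid T$ ($B$ basic types such as int, bool, unit, with a given subtyping $<:$); $T::=p\&_{i\in I}m_i(S_i).T_i\mid p\oplus_{i\in I}m_i(S_i).T_i\mid\mu t.T\mid t\mid\mathbf{end}$ (external/internal choice from/to role $p$ with $I\neq\emptyset$ and distinct labels; closed, guarded recursion; the distinguished label $\mathtt{crash}$ never in internal choice); $U::=T\mid\mathbf{stop}$. Subtyping $\leqslant$ is the largest relation with: $B\leqslant B'$ if $B<:B'$; $\mathbf{end}\leqslant\mathbf{end}$; $\mathbf{stop}\leqslant\mathbf{stop}$; $p\oplus_{i\in I\cup J}m_i(S_i).T_i\leqslant p\oplus_{i\in I}m_i(S'_i).T'_i$ if $S'_i\leqslant S_i$ and $T_i\leqslant T'_i$ for $i\in I$; $p\&_{i\in I}m_i(S_i).T_i\leqslant p\&_{i\in I\cup J}m_i(S'_i).T'_i$ if $S_i\leqslant S'_i$, $T_i\leqslant T'_i$ for $i\in I$, and ($|I|=1$ implies $m_i\neq\mathtt{crash}$ or $J=\emptyset$); $\mu t.T\leqslant T'$ if $T\{\mu t.T/t\}\leqslant T'$; $T\leqslant\mu t.T'$ if $T\leqslant T'\{\mu t.T'/t\}$. Processes: $c::=x\mid s[p]$, $d::=v\mid c$; $P::=\mathbf 0\mid(\nu s{:}\Gamma')P\mid P\mid P\mid c[q]\oplus m\langle d\rangle.P\mid c[q]\&_{i\in I}m_i(x_i).P_i\mid\mathbf{def}\,X(\tilde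 x{:}\tilde S)=P\,\mathbf{in}\,P\mid X\langle\tilde d\rangle\mid\mathbf{err}\mid s[p]^{\dagger}$ (crashed endpoint). Typing contexts: $\Gamma$ maps variables to $S$ and endpoints $s[p]$ to $U$; $\Theta$ maps process variables to type tuples; $\Gamma'\leqslant\Gamma$ iff $\mathrm{dom}(\Gamma')=\mathrm{dom}(\Gamma)$ and $\Gamma'(c)\leqslant\Gamma(c)$ for all $c$. Typing rules: $\Theta\vdash X{:}\tilde S$ if $\Theta(X)=\tilde S$; $\emptyset\vdash v{:}B$ if $v\in B$; $c{:}S\vdash c{:}S'$ if $S\leqslant S'$; $\mathrm{end}(c_1{:}S_1..c_n{:}S_n)$ iff each $S_i$ is basic or $S_i\leqslant\mathbf{end}$. $\mathrm{end}(\Gamma)\Rightarrow\Theta\cdot\Gamma\vdash\mathbf 0$; $\mathrm{end}(\Gamma)\Rightarrow\Theta\cdot\Gamma,s[p]{:}\mathbf{stop}\vdash s[p]^{\dagger}$; $\Theta\cdot\Gamma_1\vdash P_1,\ \Theta\cdot\Gamma_2\vdash P_2\Rightarrow\Theta\cdot\Gamma_1,\Gamma_2\vdash P_1\mid P_2$; $\Gamma_1\vdash c{:}q\oplus m(S).T$, $\Gamma_2\vdash d{:}S$, $S\not\leqslant\mathbf{end}$, $\Theta\cdot\Gamma,c{:}T\vdash P\Rightarrow\Theta\cdot\Gamma,\Gamma_1,\Gamma_2\vdash c[q]\oplus m\langle d\rangle.P$; $\Gamma_1\vdash c{:}q\&_{i\in I}m_i(S_i).T_i$, $\forall i\ \Theta\cdot\Gamma,y_i{:}S_i,c{:}T_i\vdash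 P_i\Rightarrow\Theta\cdot\Gamma,\Gamma_1\vdash c[q]\&_{i\in I}m_i(y_i).P_i$; $\Theta,X{:}\tilde S\cdot\tilde x{:}\tilde S\vdash P$ and $\Theta,X{:}\tilde S\cdot\Gamma\vdash Q\Rightarrow\Theta\cdot\Gamma\vdash\mathbf{def}\,X(\tilde x{:}\tilde S)=P\,\mathbf{in}\,Q$; $\Theta\vdash X{:}S_1..S_n$, $\mathrm{end}(\Gamma_0)$, $\Gamma_i\vdash d_i{:}S_i$, $S_i\not\leqslant\mathbf{end}$ $\Rightarrow\Theta\cdot\Gamma_0,\Gamma_1..\Gamma_n\vdash X\langle d_1..d_n\rangle$; if $\Gamma'=\{s[p]{:}T_p\}_{p\in I}$ satisfies a given safety predicate (an $(s;R)$-safety property, for some set of roles $R$), $s$ does not occur in $\Gamma$, and $\Theta\cdot\Gamma,\Gamma'\vdash P$, then $\Theta\cdot\Gamma\vdash(\nu s{:}\Gamma')P$. *)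

(* Defs.v *)
From Stdlib Require Import List String Arith Permutation.
Import ListNotations.
Set Implicit Arguments.

Record basics := Basics {
  btype : Type;
  bsub  : btype -> btype -> Prop;
  vtype : Type;
  vhas  : vtype -> btype -> Prop
}.

Definition role := nat.
Definition label := string.
Definition crash : label := "crash"%string.
Definition session := nat.
Definition var := string.
Definition pvar := string.

(** Session types. Recursion variables are de Bruijn indices: [TVar 0]
    refers to the nearest enclosing [TMu]. Choices are lists of branches
    (label, payload sort, continuation). *)
Inductive stype (Bs : basics) : Type :=
| TExt : role -> list (label * sort Bs * stype Bs) -> stype Bs
| TInt : role -> list (label * sort Bs * stype Bs) -> stype Bs
| TMu  : stype Bs -> stype Bs
| TVar : nat -> stype Bs
| TEnd : stype Bs
with sort (Bs : basics) : Type :=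
| SB : btype Bs -> sort Bs
| ST : stype Bs -> sort Bs.

Arguments TEnd {Bs}.
Arguments TExt {Bs}.
Arguments TInt {Bs}.
Arguments TMu {Bs}.
Arguments TVar {Bs}.
Arguments SB {Bs}.
Arguments ST {Bs}.

Definition blabels (Bs : basics) (bs : list (label * sort Bs * stype Bs)) :
  list label := map (fun b => fst (fst b)) bs.

(** Substitution T{U/t} of a closed type U for the variable with index k
    (payload sorts are closed, so they are left unchanged). *)
Fixpoint tsubst (Bs : basics) (k : nat) (U : stype Bs) (T : stype Bs) : stype Bs :=
  match T with
  | TExt p bs => TExt p (map (fun b => (fst b, tsubst k U (snd b))) bs)
  | TInt p bs => TInt p (map (fun b => (fst b, tsubst k U (snd b))) bs)
  | TMu T' => TMu (tsubst (S k) U T')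
  | TVar n => if n =? k then U else if k <? n then TVar (pred n) else TVar n
  | TEnd => TEnd
  end.

Definition unfold_mu (Bs : basics) (T : stype Bs) : stype Bs := tsubst 0 (TMu T) T.

Fixpoint unguarded (Bs : basics) (T : stype Bs) : list nat :=
  match T with
  | TVar n => [n]
  | TMu T' => map pred (filter (fun n => negb (n =? 0)) (unguarded T'))
  | _ => []
  end.

Inductive wfT (Bs : basics) : nat -> stype Bs -> Prop :=
| wf_var d n : n < d -> wfT d (TVar n)
| wf_end d : wfT d TEnd
| wf_mu d T : wfT (S d) T -> ~ In 0 (unguarded T) -> wfT d (TMu T)
| wf_ext d p bs :
    bs <> [] -> NoDup (blabels bs) ->
    (forall m S T, In (m, S, T) bs -> wfS S) ->
    (forall m S T, In (m, S, T) bs -> wfT d T) ->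
    wfT d (TExt p bs)
| wf_int d p bs :
    bs <> [] -> NoDup (blabels bs) -> ~ In crash (blabels bs) ->
    (forall m S T, In (m, S, T) bs -> wfS S) ->
    (forall m S T, In (m, S, T) bs -> wfT d T) ->
    wfT d (TInt p bs)
with wfS (Bs : basics) : sort Bs -> Prop :=
| wfS_b b : wfS (SB b)
| wfS_t T : wfT 0 T -> wfS (ST T).

CoInductive subT (Bs : basics) : stype Bs -> stype Bs -> Prop :=
| st_end : subT TEnd TEnd
| st_int p bs bs' :
    (forall m S' T', In (m, S', T') bs' ->
       exists S T, In (m, S, T) bs /\ subS S' S /\ subT T T') ->
    subT (TInt p bs) (TInt p bs')
| st_ext p bs bs' :
    (forall m S T, In (m, S, T) bs ->
       exists S' T', In (m, S', T') bs' /\ subS S S' /\ subT T T') ->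
    (List.length bs = 1 ->
       (forall m S T, In (m, S, T) bs -> m <> crash)
       \/ incl (blabels bs') (blabels bs)) ->
    subT (TExt p bs) (TExt p bs')
| st_mul T T' : subT (unfold_mu T) T' -> subT (TMu T) T'
| st_mur T T' : subT T (unfold_mu T') -> subT T (TMu T')
with subS (Bs : basics) : sort Bs -> sort Bs -> Prop :=
| ss_b b b' : bsub Bs b b' -> subS (SB b) (SB b')
| ss_t T T' : subT T T' -> subS (ST T) (ST T').

Inductive cty (Bs : basics) : Type :=
| CS : sort Bs -> cty Bs
| CStop : cty Bs.
Arguments CStop {Bs}.

Inductive subC (Bs : basics) : cty Bs -> cty Bs -> Prop :=
| sc_s S S' : subS S S' -> subC (CS S) (CS S')
| sc_stop : subC CStop CStop.

Inductive chan : Type :=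
| CVar : var -> chan
| CEp  : session -> role -> chan.

Inductive dval (Bs : basics) : Type :=
| DV : vtype Bs -> dval Bs
| DC : chan -> dval Bs.

Definition ctx (Bs : basics) := list (chan * cty Bs).

Inductive proc (Bs : basics) : Type :=
| PNil : proc Bs
| PRes : session -> ctx Bs -> proc Bs -> proc Bs
| PPar : proc Bs -> proc Bs -> proc Bs
| PSend : chan -> role -> label -> dval Bs -> proc Bs -> proc Bs
| PBranch : chan -> role -> list (label * var * proc Bs) -> proc Bs
| PDef : pvar -> list (var * sort Bs) -> proc Bs -> proc Bs -> proc Bs
| PCall : pvar -> list (dval Bs) -> proc Bs
| PErr : proc Bs
| PCrashed : session -> role -> proc Bs.

(** Contexts as finite lists; Γ1,Γ2 is a disjoint union (up to ordering). *)
Definition dom (Bs : basics) (G : ctx Bs) : list chan := map fst G.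

Definition ctx_union (Bs : basics) (G : ctx Bs) (Gs : list (ctx Bs)) : Prop :=
  NoDup (dom (List.concat Gs)) /\ Permutation G (List.concat Gs).

Definition ctx_wf (Bs : basics) (G : ctx Bs) : Prop :=
  NoDup (dom G) /\
  forall c t, In (c, t) G ->
    (exists x S, c = CVar x /\ t = CS S /\ wfS S) \/
    (exists s p T, c = CEp s p /\ t = CS (ST T) /\ wfT 0 T) \/
    (exists s p, c = CEp s p /\ t = CStop).

Definition ctx_sub (Bs : basics) (G' G : ctx Bs) : Prop :=
  NoDup (dom G') /\ NoDup (dom G) /\
  (forall c, In c (dom G') <-> In c (dom G)) /\
  (forall c t' t, In (c, t') G' -> In (c, t) G -> subC t' t).

Definition is_end (Bs : basics) (t : cty Bs) : Prop :=
  match t with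
  | CS (SB _) => True
  | CS (ST T) => subT T TEnd
  | CStop => False
  end.

Definition end_ctx (Bs : basics) (G : ctx Bs) : Prop :=
  forall c t, In (c, t) G -> is_end t.

Definition theta (Bs : basics) := pvar -> option (list (sort Bs)).

Definition theta_upd (Bs : basics) (Th : theta Bs) (X : pvar) (Ss : list (sort Bs))
  : theta Bs := fun Y => if String.eqb Y X then Some Ss else Th Y.

Definition theta_wf (Bs : basics) (Th : theta Bs) : Prop :=
  forall X Ss, Th X = Some Ss -> forall S, In S Ss -> wfS S.

Inductive typd (Bs : basics) : ctx Bs -> dval Bs -> sort Bs -> Prop :=
| td_val v b : vhas Bs v b -> typd [] (DV Bs v) (SB b)
| td_chan c S S' : subS S S' -> typd [(c, CS S)] (DC Bs c) S'.

Inductive typ (Bs : basics) (safe : session -> ctx Bs -> Prop)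
  : theta Bs -> ctx Bs -> proc Bs -> Prop :=
| t_nil Th G :
    NoDup (dom G) -> end_ctx G -> typ safe Th G (PNil Bs)
| t_crashed Th G G0 s p :
    end_ctx G0 -> ctx_union G [G0; [(CEp s p, CStop)]] ->
    typ safe Th G (PCrashed Bs s p)
| t_par Th G G1 G2 P1 P2 :
    typ safe Th G1 P1 -> typ safe Th G2 P2 -> ctx_union G [G1; G2] ->
    typ safe Th G (PPar P1 P2)
| t_send Th G G0 G1 G2 c q m S T d P :
    typd G1 (DC Bs c) (ST (TInt q [(m, S, T)])) ->
    wfT 0 (TInt q [(m, S, T)]) ->
    typd G2 d S ->
    ~ subS S (ST TEnd) ->
    typ safe Th ((c, CS (ST T)) :: G0) P ->
    ctx_union G [G0; G1; G2] ->
    typ safe Th G (PSend c q m d P)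
| t_branch Th G G0 G1 c q tbs pbs :
    typd G1 (DC Bs c) (ST (TExt q tbs)) ->
    wfT 0 (TExt q tbs) ->
    List.length pbs = List.length tbs ->
    (forall i m y P m' S T, nth_error pbs i = Some (m, y, P) ->
       nth_error tbs i = Some (m', S, T) -> m = m') ->
    (forall i m y P m' S T, nth_error pbs i = Some (m, y, P) ->
       nth_error tbs i = Some (m', S, T) ->
       typ safe Th ((CVar y, CS S) :: (c, CS (ST T)) :: G0) P) ->
    ctx_union G [G0; G1] ->
    typ safe Th G (PBranch c q pbs)
| t_def Th G X params P Q :
    Th X = None ->
    (forall x S, In (x, S) params -> wfS S) ->
    typ safe (theta_upd Th X (map snd params))
        (map (fun xs => (CVar (fst xs), CS (snd xs))) params) P ->
    typ safe (theta_upd Th X (map snd params)) G Q ->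
    typ safe Th G (PDef X params P Q)
| t_call Th G X Ss G0 Gs ds :
    Th X = Some Ss ->
    end_ctx G0 ->
    List.length ds = List.length Ss -> List.length Gs = List.length Ss ->
    (forall i Gi d S, nth_error Gs i = Some Gi -> nth_error ds i = Some d ->
       nth_error Ss i = Some S -> typd Gi d S /\ ~ subS S (ST TEnd)) ->
    ctx_union G (G0 :: Gs) ->
    typ safe Th G (PCall X ds)
| t_res Th G s G' P :
    (forall c t, In (c, t) G' -> exists p T, c = CEp s p /\ t = CS (ST T)) ->
    ctx_wf G' ->
    safe s G' ->
    (forall p, ~ In (CEp s p) (dom G)) ->
    typ safe Th (G ++ G') P ->
    typ safe Th G (PRes s G' P).

(* Main.v *)
Require Import Defs.
From Stdlib Require Import List String Arith Permutation.
Require Import Defs.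
From Stdlib Require Import List String Arith Permutation Lia.
Import ListNotations.

Fixpoint mudepth {Bs : basics} (T : stype Bs) : nat :=
  match T with TMu T' => S (mudepth T') | _ => 0 end.

Lemma tsubst_mudepth (Bs : basics) : forall (T : stype Bs) k U,
  ~ In k (unguarded T) -> mudepth (tsubst k U T) <= mudepth T.
Proof.
  induction T; intros k U H; simpl; try lia.
  - apply le_n_S. apply IHT. intro HI. apply H. simpl.
    change k with (pred (S k)). apply in_map. apply filter_In. split; auto.
  - destruct (n =? k) eqn:E.
    + apply Nat.eqb_eq in E; subst. exfalso; apply H; simpl; auto.
    + destruct (k <? n); simpl; lia.
Qed.

Lemma wf_unguarded (Bs : basics) : forall d (T : stype Bs), wfT d T ->
  forall n, In n (unguarded T) -> n < d.
Proof.
  induction 1; simpl; intros n0 Hn; try tauto.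
  - destruct Hn as [<-|[]]; auto.
  - apply in_map_iff in Hn as [m [<- Hm]]. apply filter_In in Hm as [Hm Hz].
    apply IHwfT in Hm. destruct m; simpl in *; [discriminate|lia].
Qed.

Lemma wf_weaken (Bs : basics) : forall d (T : stype Bs), wfT d T ->
  forall d', d <= d' -> wfT d' T.
Proof.
  induction 1; intros d' Hd.
  - constructor; lia.
  - constructor.
  - constructor; auto. apply IHwfT; lia.
  - constructor; eauto.
  - constructor; eauto.
Qed.

Lemma unguarded_tsubst (Bs : basics) : forall (T : stype Bs) k U,
  unguarded U = [] -> forall n, In n (unguarded (tsubst k U T)) ->
  exists m, In m (unguarded T) /\ m <> k /\ n = (if k <? m then pred m else m).
Proof.
  induction T; intros k U HU n0 Hn; simpl in *; try tauto.
  - apply in_map_iff in Hn as [m1 [<- Hm1]]. apply filter_In in Hm1 as [Hm1 Hz].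
    destruct (IHT (S k) U HU _ Hm1) as [m [Hm [Hmk Heq]]].
    destruct m as [|m].
    + simpl in Heq. subst. discriminate.
    + exists m. split; [|split].
      * change m with (pred (S m)). apply in_map, filter_In. split; auto.
      * lia.
      * subst m1. replace (S k <? S m) with (k <? m) by reflexivity.
        destruct (k <? m) eqn:E2;
        try apply Nat.ltb_lt in E2; try apply Nat.ltb_ge in E2; simpl; lia.
  - destruct (n =? k) eqn:E.
    + rewrite HU in Hn; destruct Hn.
    + apply Nat.eqb_neq in E. exists n. split; [auto|split; auto].
      destruct (k <? n); simpl in Hn; destruct Hn as [<-|[]]; auto.
Qed.

Lemma blabels_map (Bs : basics) (f : stype Bs -> stype Bs) bs :
  blabels (map (fun b : label * sort Bs * stype Bs => (fst b, f (snd b))) bs) = blabels bs.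
Proof. unfold blabels. rewrite map_map. reflexivity. Qed.

Lemma in_map_br (Bs : basics) (f : stype Bs -> stype Bs) bs m S T :
  In (m, S, T) (map (fun b : label * sort Bs * stype Bs => (fst b, f (snd b))) bs) ->
  exists T0, In (m, S, T0) bs /\ T = f T0.
Proof.
  intro H. apply in_map_iff in H as [[[m' S'] T0] [Heq Hin]].
  simpl in Heq. inversion Heq; subst. eauto.
Qed.

Lemma wf_tsubst (Bs : basics) : forall d (T : stype Bs), wfT d T ->
  forall k U, k < d -> wfT 0 U -> wfT (pred d) (tsubst k U T).
Proof.
  induction 1; intros k U Hk HU; simpl.
  - destruct (n =? k) eqn:E.
    + eapply wf_weaken; eauto; lia.
    + apply Nat.eqb_neq in E. destruct (k <? n) eqn:E2.
      * apply Nat.ltb_lt in E2. constructor; lia.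
      * apply Nat.ltb_ge in E2. constructor; lia.
  - constructor.
  - constructor.
    + replace (S (pred d)) with (pred (S d)) by lia. apply IHwfT; auto; lia.
    + intro Hin.
      assert (HU' : unguarded U = []).
      { destruct (unguarded U) as [|x l] eqn:E; auto.
        exfalso. assert (x < 0) by (eapply wf_unguarded; eauto; rewrite E; left; auto). lia. }
      destruct (unguarded_tsubst _ T (S k) U HU' 0 Hin) as [m [Hm [Hmk Heq]]].
      destruct m; [contradiction|].
      destruct (S k <? S m) eqn:E; [apply Nat.ltb_lt in E|]; lia.
  - constructor.
    + destruct bs; simpl; congruence.
    + rewrite blabels_map; auto.
    + intros m S T Hin. apply in_map_br in Hin as [T0 [Hin _]]. eauto.
    + intros m S T Hin. apply in_map_br in Hin as [T0 [Hin ->]]. eauto.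
  - constructor.
    + destruct bs; simpl; congruence.
    + rewrite blabels_map; auto.
    + rewrite blabels_map; auto.
    + intros m S T Hin. apply in_map_br in Hin as [T0 [Hin _]]. eauto.
    + intros m S T Hin. apply in_map_br in Hin as [T0 [Hin ->]]. eauto.
Qed.

Lemma wf_unfold (Bs : basics) (T : stype Bs) : wfT 0 (TMu T) -> wfT 0 (unfold_mu T).
Proof.
  intro H. inversion H; subst. unfold unfold_mu.
  change 0 with (pred 1). apply wf_tsubst; auto.
Qed.

Lemma unfold_depth (Bs : basics) (T : stype Bs) : wfT 0 (TMu T) ->
  mudepth (unfold_mu T) < mudepth (TMu T).
Proof.
  intro H. inversion H; subst. simpl. unfold unfold_mu.
  pose proof (tsubst_mudepth _ T 0 (TMu T) H3). lia.
Qed.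

Lemma subT_mul_inv (Bs : basics) : forall (A X : stype Bs),
  subT (TMu A) X -> subT (unfold_mu A) X.
Proof.
  cofix CH. intros A X H. inversion H; subst.
  - assumption.
  - apply st_mur. apply CH. assumption.
Qed.

Lemma subT_mur_inv (Bs : basics) : forall (X B : stype Bs),
  subT X (TMu B) -> subT X (unfold_mu B).
Proof.
  cofix CH. intros X B H. inversion H; subst.
  - apply st_mul. apply CH. assumption.
  - assumption.
Qed.

Lemma descend (Bs : basics) : forall n (B A C : stype Bs), mudepth B <= n -> wfT 0 B ->
  subT A B -> subT B C ->
  exists B0, mudepth B0 = 0 /\ wfT 0 B0 /\ subT A B0 /\ subT B0 C.
Proof.
  induction n; intros B A C Hd W H1 H2.
  - exists B. destruct B; simpl in Hd; try lia; auto.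
  - destruct B; try solve [exists (TExt r l); auto]; try solve [exists (TInt r l); auto];
      try solve [exists (TVar n0); auto]; try solve [exists TEnd; auto].
    pose proof (unfold_depth _ _ W).
    apply (IHn (unfold_mu B)); [lia | apply wf_unfold; auto |
      apply subT_mur_inv; auto | apply subT_mul_inv; auto].
Qed.
Lemma blabels_in (Bs : basics) (bs : list (label * sort Bs * stype Bs)) m S T :
  In (m, S, T) bs -> In m (blabels bs).
Proof. intro H. unfold blabels. apply in_map_iff. exists (m, S, T); auto. Qed.

Lemma ext_cond (Bs : basics) (bs bs' bs'' : list (label * sort Bs * stype Bs)) :
  bs' <> [] -> NoDup (blabels bs') ->
  (forall m S T, In (m, S, T) bs -> exists S' T', In (m, S', T') bs') ->
  (List.length bs = 1 -> (forall m S T, In (m, S, T) bs -> m <> crash) \/ incl (blabels bs') (blabels bs)) ->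
  (List.length bs' = 1 -> (forall m S T, In (m, S, T) bs' -> m <> crash) \/ incl (blabels bs'') (blabels bs')) ->
  (List.length bs = 1 -> (forall m S T, In (m, S, T) bs -> m <> crash) \/ incl (blabels bs'') (blabels bs)).
Proof.
  intros Hne Hnd Hmap C1 C2 Hl.
  destruct (C1 Hl) as [L|I1]; [left; auto|].
  assert (Hl' : List.length bs' = 1).
  { destruct bs as [|b [|b2 r]]; simpl in Hl; try discriminate.
    assert (List.length (blabels bs') <= List.length (blabels [b])).
    { apply NoDup_incl_length; auto. }
    unfold blabels in H; rewrite length_map in H. simpl in H.
    destruct bs'; [congruence|simpl in *; lia]. }
  destruct (C2 Hl') as [L|I2].
  - left. intros m S T Hin. destruct (Hmap _ _ _ Hin) as (S' & T' & Hin'). eauto.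
  - right. intros x Hx. auto.
Qed.

Lemma subT_trans (Bs : basics)
  (bsub_trans : forall a b c, bsub Bs a b -> bsub Bs b c -> bsub Bs a c) :
  forall (A B C : stype Bs), wfT 0 B -> subT A B -> subT B C -> subT A C.
Proof.
  cofix CH. intros A B C WB H1 H2.
  destruct A as [pa bsa|pa bsa|A'|na|].
  3: { apply st_mul. exact (CH _ B C WB (subT_mul_inv _ _ _ H1) H2). }
  all: destruct C as [pc bsc|pc bsc|C'|nc|];
    try (apply st_mur; exact (CH _ B _ WB H1 (subT_mur_inv _ _ _ H2))).
  all: destruct (descend _ (mudepth B) B _ _ (le_n _) WB H1 H2) as (B0 & D0 & W0 & H1' & H2');
    destruct B0 as [pb bsb|pb bsb|B'|nb|]; simpl in D0; try discriminate;
    inversion H1'; subst; inversion H2'; subst.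
  -
    inversion W0; subst.
    rename H4 into Hab, H6 into C1, H5 into Hbc, H8 into C2, H3 into Hne, H7 into Hnd,
      H10 into WS0, H11 into WT0.
    apply st_ext.
    + intros m S T Hin. destruct (Hab _ _ _ Hin) as (S' & T' & Hin' & HS1 & HT1).
      destruct (Hbc _ _ _ Hin') as (S'' & T'' & Hin'' & HS2 & HT2).
      exists S'', T''. split; [exact Hin''|split].
      * destruct HS1 as [b1 b2 Hb|T1 T2 HT];
          inversion HS2 as [b1' b2' Hb'|T1' T2' HT']; subst.
        -- apply ss_b. eapply bsub_trans; eauto.
        -- apply ss_t. assert (WS := WS0 _ _ _ Hin'). inversion WS as [|T0 HW]; subst.
           exact (CH _ _ _ HW HT HT').
      * exact (CH _ _ _ (WT0 _ _ _ Hin') HT1 HT2).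
    + apply (ext_cond _ bsa bsb bsc); auto.
      intros m S T Hin. destruct (Hab _ _ _ Hin) as (S' & T' & Hin' & _). eauto.
  -
    inversion W0; subst.
    rename H0 into Hab, H3 into Hbc, H9 into WS0, H10 into WT0.
    apply st_int.
    intros m S'' T'' Hin. destruct (Hbc _ _ _ Hin) as (S' & T' & Hin' & HS1 & HT1).
    destruct (Hab _ _ _ Hin') as (S & T & Hin0 & HS2 & HT2).
    exists S, T. split; [exact Hin0|split].
    + destruct HS1 as [b1 b2 Hb|T1 T2 HT];
        inversion HS2 as [b1' b2' Hb'|T1' T2' HT']; subst.
      * apply ss_b. eapply bsub_trans; eauto.
      * apply ss_t. assert (WS := WS0 _ _ _ Hin'). inversion WS as [|T0 HW]; subst.
        exact (CH _ _ _ HW HT HT').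
    + exact (CH _ _ _ (WT0 _ _ _ Hin') HT2 HT1).
  - apply st_end.
Qed.

Lemma subS_trans (Bs : basics)
  (bsub_trans : forall a b c, bsub Bs a b -> bsub Bs b c -> bsub Bs a c) :
  forall (A B C : sort Bs), wfS B -> subS A B -> subS B C -> subS A C.
Proof.
  intros A B C W H1 H2. destruct H1 as [b1 b2 Hb|T1 T2 HT];
    inversion H2 as [b1' b2' Hb'|T1' T2' HT']; subst.
  - apply ss_b. eauto.
  - apply ss_t. inversion W; subst. eapply subT_trans; eauto.
Qed.
Definition wfC {Bs : basics} (t : cty Bs) : Prop :=
  match t with CS s => wfS s | CStop => True end.

Definition RR {Bs : basics} (a b : chan * cty Bs) : Prop :=
  fst a = fst b /\ (snd a = snd b \/ (subC (snd a) (snd b) /\ wfC (snd b))).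

Lemma RR_refl (Bs : basics) (a : chan * cty Bs) : RR a a.
Proof. split; auto. Qed.

Lemma Forall2_RR_refl (Bs : basics) (l : ctx Bs) : Forall2 RR l l.
Proof. induction l; constructor; auto using RR_refl. Qed.

Lemma Forall2_RR_dom (Bs : basics) (l1 l2 : ctx Bs) : Forall2 RR l1 l2 -> dom l1 = dom l2.
Proof. induction 1; simpl; auto. destruct H; congruence. Qed.

Lemma Forall2_split_concat (Bs : basics) : forall (Gs : list (ctx Bs)) L,
  Forall2 RR L (List.concat Gs) ->
  exists Gs', L = List.concat Gs' /\ Forall2 (Forall2 RR) Gs' Gs.
Proof.
  induction Gs; simpl; intros L H.
  - inversion H; subst. exists []. auto.
  - apply Forall2_app_inv_r in H as (l1 & l2 & H1 & H2 & ->).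
    destruct (IHGs _ H2) as (Gs' & -> & HF). exists (l1 :: Gs'). simpl; auto.
Qed.

Lemma union_split (Bs : basics) (G G' G'' : ctx Bs) Gs :
  ctx_union G Gs -> Permutation G' G'' -> Forall2 RR G'' G ->
  exists Gs', ctx_union G' Gs' /\ Forall2 (Forall2 RR) Gs' Gs.
Proof.
  intros [Hnd Hp] Hp' HF.
  destruct (Permutation_Forall2 (Permutation_sym (Permutation_sym Hp)) (Forall2_flip HF))
    as (L & HpL & HFL).
  apply Forall2_flip in HFL.
  destruct (Forall2_split_concat _ _ _ HFL) as (Gs' & -> & HGs).
  exists Gs'. split; auto. split.
  - rewrite (Forall2_RR_dom _ _ _ HFL). auto.
  - eapply Permutation_trans; eauto.
Qed.

Lemma Forall2_in_l (Bs : basics) (l1 l2 : ctx Bs) x :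
  Forall2 RR l1 l2 -> In x l1 -> exists y, In y l2 /\ RR x y.
Proof.
  induction 1; simpl; [tauto|]. intros [<-|Hin].
  - eauto.
  - destruct (IHForall2 Hin) as (y0 & ? & ?). eauto.
Qed.

Lemma is_end_RR (Bs : basics)
  (bsub_trans : forall a b c, bsub Bs a b -> bsub Bs b c -> bsub Bs a c)
  (t' t : cty Bs) :
  (t' = t \/ (subC t' t /\ wfC t)) -> is_end t -> is_end t'.
Proof.
  intros [->|[Hs W]] He; auto.
  destruct Hs as [S1 S2 Hs|]; simpl in *; auto.
  destruct Hs as [b1 b2 Hb|T1 T2 HT]; simpl in *; auto.
  inversion W; subst. eapply subT_trans; eauto.
Qed.

Lemma end_RR (Bs : basics)
  (bsub_trans : forall a b c, bsub Bs a b -> bsub Bs b c -> bsub Bs a c)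
  (G' G : ctx Bs) : Forall2 RR G' G -> end_ctx G -> end_ctx G'.
Proof.
  intros HF He c t' Hin.
  destruct (Forall2_in_l _ _ _ _ HF Hin) as ([c0 t] & Hin0 & _ & Hr).
  eapply is_end_RR; eauto.
Qed.

Lemma end_perm (Bs : basics) (G' G : ctx Bs) : Permutation G' G -> end_ctx G -> end_ctx G'.
Proof.
  intros Hp He c t Hin. apply (He c). eapply Permutation_in; eauto.
Qed.

Lemma typd_RR (Bs : basics)
  (bsub_trans : forall a b c, bsub Bs a b -> bsub Bs b c -> bsub Bs a c)
  (G G' : ctx Bs) d S : typd G d S -> Forall2 RR G' G -> typd G' d S.
Proof.
  intros Ht HF. destruct Ht.
  - inversion HF; subst. constructor; auto.
  - inversion HF as [|[c' t'] y l' l [Hc Hr] Hnil]; subst. inversion Hnil; subst.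
    simpl in *; subst.
    destruct Hr as [->|[Hs W]].
    + constructor; auto.
    + inversion Hs; subst. constructor. eapply subS_trans; eauto.
Qed.

Lemma Forall2_nth (Bs : basics) : forall (Gs' Gs : list (ctx Bs)) i Gi',
  Forall2 (Forall2 RR) Gs' Gs -> nth_error Gs' i = Some Gi' ->
  exists Gi, nth_error Gs i = Some Gi /\ Forall2 RR Gi' Gi.
Proof.
  intros Gs' Gs i Gi' H; revert i; induction H; intros [|i] Hn; simpl in *; try discriminate.
  - inversion Hn; subst; eauto.
  - eauto.
Qed.

Lemma narrowing (Bs : basics) (safe : session -> ctx Bs -> Prop)
  (bsub_trans : forall a b c, bsub Bs a b -> bsub Bs b c -> bsub Bs a c) :
  forall Th G P, typ safe Th G P ->
  forall G' G'', Permutation G' G'' -> Forall2 RR G'' G -> typ safe Th G' P.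
Proof.
  induction 1; intros Gn Gm Hp HF.
  - constructor.
    + rewrite <- (Forall2_RR_dom _ _ _ HF) in H.
      eapply Permutation_NoDup; [apply Permutation_map, Permutation_sym; eauto | exact H].
    + eapply end_perm; [exact Hp|]. eapply end_RR; eauto.
  - destruct (union_split _ _ _ _ _ H0 Hp HF) as (Gs' & HU & HGs).
    inversion HGs as [|A B l1 l2 HA HB]; subst. inversion HB as [|C D l3 l4 HC HD]; subst.
    inversion HD; subst.
    inversion HC as [|[c' t'] y l' l [Hc Hr] Hnil]; subst. inversion Hnil; subst.
    simpl in *; subst.
    assert (t' = CStop) as ->.
    { destruct Hr as [->|[Hs _]]; auto. inversion Hs; auto. }
    eapply t_crashed; [|exact HU]. eapply end_RR; eauto.
  - destruct (union_split _ _ _ _ _ H1 Hp HF) as (Gs' & HU & HGs).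
    inversion HGs as [|A B l1 l2 HA HB]; subst. inversion HB as [|C D l3 l4 HC HD]; subst.
    inversion HD; subst.
    eapply t_par; [eapply IHtyp1 | eapply IHtyp2 | exact HU]; eauto.
  - destruct (union_split _ _ _ _ _ H4 Hp HF) as (Gs' & HU & HGs).
    inversion HGs as [|A B l1 l2 HA HB]; subst. inversion HB as [|C D l3 l4 HC HD]; subst.
    inversion HD as [|E F l5 l6 HE HF']; subst. inversion HF'; subst.
    eapply t_send with (G0 := A) (G1 := C) (G2 := E); [| exact H0 | | exact H2 | | exact HU].
    + eapply typd_RR; eauto.
    + eapply typd_RR; eauto.
    + eapply IHtyp; [apply Permutation_refl|]. constructor; [apply RR_refl|]. exact HA.
  - destruct (union_split _ _ _ _ _ H5 Hp HF) as (Gs' & HU & HGs).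
    inversion HGs as [|A B l1 l2 HA HB]; subst. inversion HB as [|C D l3 l4 HC HD]; subst.
    inversion HD; subst.
    eapply t_branch with (G0 := A) (G1 := C); [| exact H0 | exact H1 | exact H2 | | exact HU].
    + eapply typd_RR; eauto.
    + intros. eapply H4; [eassumption|eassumption|apply Permutation_refl|].
      apply Forall2_cons; [apply RR_refl|]. apply Forall2_cons; [apply RR_refl|]. exact HA.
  - eapply t_def; [exact H | exact H0 | exact H1 | eapply IHtyp2; eauto].
  - destruct (union_split _ _ _ _ _ H4 Hp HF) as (Gs' & HU & HGs).
    inversion HGs as [|A B l1 l2 HA HB]; subst.
    eapply t_call with (G0 := A) (Gs := l1); [exact H | | exact H1 | | | exact HU].
    + eapply end_RR; eauto.
    + rewrite <- H2. exact (Forall2_length HB).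
    + intros i Gi d S Hi Hd HS.
      destruct (Forall2_nth _ _ _ _ _ HB Hi) as (Gi0 & Hi0 & HR).
      destruct (H3 _ _ _ _ Hi0 Hd HS). split; auto. eapply typd_RR; eauto.
  - eapply t_res; eauto.
    + intros p Hin. apply (H2 p).
      rewrite <- (Forall2_RR_dom _ _ _ HF).
      eapply Permutation_in; [apply Permutation_map; exact Hp | exact Hin].
    + eapply IHtyp; [apply Permutation_app_tail; exact Hp|].
      apply Forall2_app; auto. apply Forall2_RR_refl.
Qed.

Lemma build (Bs : basics) : forall (G G' : ctx Bs),
  NoDup (dom G') -> NoDup (dom G) -> (forall c, In c (dom G') <-> In c (dom G)) ->
  (forall c t' t, In (c, t') G' -> In (c, t) G -> subC t' t) ->
  (forall c t, In (c, t) G -> wfC t) ->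
  exists G'', Permutation G' G'' /\ Forall2 RR G'' G.
Proof.
  induction G as [|[c t] G IH]; intros G' N1 N2 Hd Hs Hw.
  - destruct G' as [|[c' t'] G'].
    + exists []; auto.
    + exfalso. apply (proj1 (Hd c')). simpl; auto.
  - assert (Hc : In c (dom G')) by (apply Hd; simpl; auto).
    unfold dom in Hc. apply in_map_iff in Hc as [[c1 t'] [Hc1 Hin]]. simpl in Hc1; subst c1.
    apply in_split in Hin as (X & Y & ->).
    unfold dom in N1. rewrite map_app in N1. simpl in N1.
    assert (N1' : NoDup (map fst (X ++ Y))) by (rewrite map_app; eapply NoDup_remove_1; eauto).
    assert (Nc : ~ In c (map fst (X ++ Y))) by (rewrite map_app; eapply NoDup_remove_2; eauto).
    simpl in N2. inversion N2 as [|? ? Nc2 N2']; subst.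
    destruct (IH (X ++ Y)) as (G'' & Hp & HF).
    + exact N1'.
    + exact N2'.
    + intros c0. split; intro H.
      * assert (In c0 (dom (X ++ (c, t') :: Y))).
        { unfold dom in *. rewrite map_app in *. simpl. apply in_app_or in H as [?|?]; auto with datatypes. }
        apply Hd in H0. simpl in H0. destruct H0 as [<-|?]; auto. contradiction.
      * assert (In c0 (dom ((c, t) :: G))) by (simpl; auto).
        apply Hd in H0. unfold dom in *. rewrite map_app in *. simpl in H0.
        apply in_app_or in H0 as [?|[<-|?]]; auto with datatypes. contradiction.
    + intros c0 t0' t0 H1 H2. eapply Hs; [|simpl; right; exact H2].
      apply in_app_or in H1 as [?|?]; auto with datatypes.
    + intros c0 t0 H. eapply Hw. simpl; eauto.
    + exists ((c, t') :: G''). split.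
      * eapply Permutation_trans; [apply Permutation_sym, Permutation_middle|]. auto.
      * constructor; auto. split; auto. right. split.
        -- eapply Hs; simpl; auto with datatypes.
        -- eapply Hw; simpl; eauto.
Qed.

Theorem mainTheorem4 (Bs : basics) (safe : session -> ctx Bs -> Prop)
  (bsub_trans : forall a b c, bsub Bs a b -> bsub Bs b c -> bsub Bs a c)
  (Th : theta Bs) (G G' : ctx Bs) (P : proc Bs) :
  theta_wf Th -> ctx_wf G -> ctx_wf G' ->
  typ safe Th G P -> ctx_sub G' G -> typ safe Th G' P.
Proof.
  intros _ [_ HwG] _ Ht [N1 [N2 [Hd Hs]]].
  destruct (build _ G G' N1 N2 Hd Hs) as (G'' & Hp & HF).
  - intros c t Hin. destruct (HwG c t Hin) as [(x & S & _ & -> & W)|[(s & p & T & _ & -> & W)|(s & p & _ & ->)]];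
      simpl; auto. constructor; auto.
  - eapply narrowing; eauto.
Qed.
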